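(* Let $\Phi:\{1,\dots,B\}\to\mathcal{A}=\{1,\dots,A\}$ and let $\Delta(\varepsilon)$ be a $B\times B$ stochastic matrix family normally parameterized by $\varepsilon\ge0$; let $Z=\Phi(Y)$ where $Y$ is the stationary Markov chain with transition matrix $\Delta(\varepsilon)$. Let $z_{-m}^0\in\mathcal{A}^{m+1}$ and $\hat z_{-\hat m}^0\in\mathcal{A}^{\hat m+1}$ be two sequences, and let $n\le m,\hat m$ and $k\ge 0$ be such that $z_{-n}^0=\hat z_{-n}^0$ and $$\mathrm{ord}\big(p(z_{-n}^{-1}\mid z_{-m}^{-n-1})\big)\le k,\qquad \mathrm{ord}\big(p(\hat z_{-n}^{-1}\mid \hat z_{-\hat m}^{-n-1})\big)\le k.$$ Then $b_j(z_{-m}^0)=b_j(\hat z_{-\hat m}^0)$ for all $j$ with $0\le j\le n-4k-1$.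
   Context: For $a\in\mathcal{A}$, $\Delta_a$ is the $B\times B$ matrix with $\Delta_a(i,j)=\Delta(i,j)$ if $\Phi(j)=a$ and $0$ otherwise. A matrix family is a weak Black Hole if every $\Delta_a$ is either the zero matrix or of rank one. $\Delta(\varepsilon)$ is normally parameterized by $\varepsilon\ge0$ if (i) each entry is analytic at $\varepsilon=0$, (ii) for $\varepsilon>0$, $\Delta(\varepsilon)$ is non-negative and irreducible, (iii) $\Delta(0)$ is a weak Black Hole. For $\varepsilon>0$ all probabilities refer to the stationary chain; conditional probabilities of hidden-Markov sequences are analytic around $\varepsilon=0$. For a function $f$ analytic at $\varepsilon=0$, $\mathrm{ord}(f)$ is the degree of the first nonzero term of its Taylor series at $0$. $b_j(z_{-m}^0)$ denotes the coefficient of $\varepsilon^j$ in the Taylor expansion of $p(z_0\mid z_{-m}^{-1})=P(Z_0=z_0\mid Z_{-m}^{-1}=z_{-m}^{-1})$ around $\varepsilon=0$. Notation: $z_{s}^{t}=(z_s,\dots,z_t)$. *)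

(* Defs.v *)
From HB Require Import structures.
From mathcomp Require Import all_boot all_order all_algebra.
From mathcomp Require Import all_classical all_reals all_analysis.
Set Implicit Arguments. Unset Strict Implicit. Unset Printing Implicit Defensive.
Import Order.TTheory GRing.Theory Num.Theory.
Import numFieldNormedType.Exports.
Local Open Scope ring_scope.
Local Open Scope classical_set_scope.

Section HMM.
Variables (R : realType) (A B : nat).
Variable Phi : 'I_B -> 'I_A.

Definition restr_mx (D : 'M[R]_B) (a : 'I_A) : 'M[R]_B :=
  \matrix_(i, j) (if Phi j == a then D i j else 0).

Definition weak_black_hole (D : 'M[R]_B) : Prop :=
  forall a : 'I_A, restr_mx D a = 0 \/ \rank (restr_mx D a) = 1%N.

Definition nonneg_mx (D : 'M[R]_B) : Prop := forall i j, 0 <= D i j.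

Definition row_stochastic (D : 'M[R]_B) : Prop :=
  nonneg_mx D /\ forall i, \sum_j D i j = 1.

Definition irreducible_mx (D : 'M[R]_B) : Prop :=
  forall i j, exists k : nat, 0 < (D ^+ k) i j.

Definition power_series_on (r : R) (c : nat -> R) (f : R -> R) : Prop :=
  forall x, `|x| < r ->
    (fun N : nat => \sum_(0 <= k < N) c k * x ^+ k) @ \oo --> f x.

Definition analytic_at0 (f : R -> R) : Prop :=
  exists r c, 0 < r /\ power_series_on r c f.

(* c is the Taylor coefficient sequence at 0 of (the analytic extension of)
   a function f that is only meaningful for eps > 0: the power series
   converges to f on some interval (0, r). *)
Definition taylor_coeffs0 (f : R -> R) (c : nat -> R) : Prop :=
  exists r, 0 < r /\ forall x, 0 < x < r ->
    (fun N : nat => \sum_(0 <= k < N) c k * x ^+ k) @ \oo --> f x.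

Definition ord_le (f : R -> R) (k : nat) : Prop :=
  exists c, taylor_coeffs0 f c /\ exists i, (i <= k)%N /\ c i != 0.

Definition normally_parameterized (Delta : R -> 'M[R]_B) : Prop :=
  [/\ (forall i j, analytic_at0 (fun e => Delta e i j)),
      (forall e, 0 < e -> row_stochastic (Delta e) /\ irreducible_mx (Delta e))
    & weak_black_hole (Delta 0)].

Definition stationary_dist (D : 'M[R]_B) (p : 'rV[R]_B) : Prop :=
  [/\ forall i, 0 <= p 0 i, \sum_i p 0 i = 1 & p *m D = p].

(* Stationary probability P(Z_0^l = s) of a word s = [:: s_0; ...; s_l]
   (listed in time order) for the chain with initial law p, transitions D. *)
Definition word_prob (p : 'rV[R]_B) (D : 'M[R]_B) (s : seq 'I_A) : R :=
  match s with
  | [::] => 1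
  | a :: s' =>
      \sum_i (foldl (fun v b => v *m restr_mx D b)
                    (\row_j (if Phi j == a then p 0 j else 0)) s') 0 i
  end.

(* conditional probability p(u | v) = P(v u) / P(v), v the past, u the future *)
Definition cond_prob (p : 'rV[R]_B) (D : 'M[R]_B) (u v : seq 'I_A) : R :=
  word_prob p D (v ++ u) / word_prob p D v.

End HMM.

(* Main.v *)
Require Import Defs.
From HB Require Import structures.
From mathcomp Require Import all_boot all_order all_algebra.
From mathcomp Require Import all_classical all_reals all_analysis.
From mathcomp Require Import ring lra zify.
Import Order.TTheory GRing.Theory Num.Theory.
Import numFieldNormedType.Exports.
Set Implicit Arguments. Unset Strict Implicit. Unset Printing Implicit Defensive.
Local Open Scope ring_scope.
Local Open Scope classical_set_scope.

Section T.
Variable R : realType.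

Lemma le_sum_nat (F : nat -> R) n N : (n < N)%N -> (forall k, 0 <= F k) ->
  F n <= \sum_(0 <= k < N) F k.
Proof.
move=> lt F0; rewrite big_mkord (bigD1 (Ordinal lt)) //=.
by rewrite lerDl sumr_ge0.
Qed.

Lemma term_bounded (c : nat -> R) (x0 l : R) :
  (fun N : nat => \sum_(0 <= k < N) c k * x0 ^+ k) @ \oo --> l ->
  exists M, forall n, `|c n * x0 ^+ n| <= M.
Proof.
move=> /cvgrPdist_le /(_ 1 ltr01) [N0 _ HN].
exists (2 + \sum_(0 <= n < N0) `|c n * x0 ^+ n|) => n.
have [lt|ge] := ltnP n N0.
  rewrite -[X in X <= _]add0r lerD ?ler0n //.
  exact: le_sum_nat.
rewrite -[X in X <= _]addr0 lerD ?sumr_ge0 //.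
have h1 := HN n ge; have h2 := HN n.+1 (leqW ge).
rewrite /= big_nat_recr //= in h2.
set S := \sum_(0 <= k < n) _ in h1 h2.
have -> : c n * x0 ^+ n = (l - S) - (l - (S + c n * x0 ^+ n)) by ring.
apply: (le_trans (ler_normB _ _)).
by rewrite (_ : 2 = 1 + 1) ?lerD //; ring.
Qed.

Lemma geom_bound (q : R) N d : 0 <= q -> 2 * q <= 1 ->
  \sum_(N <= k < N + d) q ^+ k <= 2 * q ^+ N - 2 * q ^+ (N + d).
Proof.
move=> q0 q1; elim: d => [|d IH].
  by rewrite addn0 big_geq // subrr.
rewrite addnS big_nat_recr ?leq_addr //=.
apply: (le_trans (lerD IH (lexx _))).
rewrite exprS; set a := q ^+ (N + d).
have a0 : 0 <= a by rewrite exprn_ge0.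
have : 0 <= a * (1 - 2 * q) by rewrite mulr_ge0 // subr_ge0.
lra.
Qed.

Lemma tail_bound (c : nat -> R) (f : R -> R) (r : R) : 0 < r ->
  (forall x, 0 < x < r ->
     (fun N : nat => \sum_(0 <= k < N) c k * x ^+ k) @ \oo --> f x) ->
  forall N, exists C, 0 <= C /\ \forall x \near 0^'+,
    `|f x - \sum_(0 <= k < N) c k * x ^+ k| <= C * x ^+ N.
Proof.
move=> r0 Hf N.
set x0 := r / 2.
have x00 : 0 < x0 by rewrite divr_gt0.
have x0r : x0 < r by rewrite /x0; lra.
have [M HM] := @term_bounded c x0 _ (Hf x0 ltac:(by rewrite x00 x0r)).
have M0 : 0 <= M by apply: le_trans (HM 0%N); rewrite normr_ge0.
exists (2 * M / x0 ^+ N); split.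
  apply: divr_ge0; [by rewrite mulr_ge0 | by rewrite exprn_ge0 // ltW].
have h1 : \forall x \near 0^'+, 0 < x := nbhs_right_gt 0.
have h2 : \forall x \near 0^'+, x < x0 / 2 := nbhs_right_lt (ltac:(by rewrite divr_gt0) : 0 < x0 / 2).
near=> x.
have xp : 0 < x by near: x; exact: h1.
have xs : x < x0 / 2 by near: x; exact: h2.
have xr : 0 < x < r by rewrite xp /=; lra.
set q := x / x0.
have q0 : 0 <= q by rewrite divr_ge0 ?ltW.
have q1 : 2 * q <= 1.
  rewrite /q mulrA ler_pdivrMr // mul1r; lra.
have xq : x = q * x0 by rewrite /q divfK // gt_eqF.
set SN := \sum_(0 <= k < N) c k * x ^+ k.
set b := 2 * M * q ^+ N.
have key : forall K, (N <= K)%N ->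
   `|\sum_(0 <= k < K) c k * x ^+ k - SN| <= b.
  move=> K /subnKC <-; set d := (K - N)%N.
  rewrite /SN (big_cat_nat _ (n := N)) ?leq_addr //= addrAC subrr add0r.
  apply: (le_trans (ler_norm_sum _ _ _)).
  apply: (le_trans (y := \sum_(N <= k < N + d) M * q ^+ k)).
    apply: ler_sum => k _.
    rewrite xq exprMn mulrCA normrM (ger0_norm (exprn_ge0 _ q0)) mulrC.
    by rewrite ler_wpM2r ?exprn_ge0 ?HM.
  rewrite -mulr_sumr.
  apply: le_trans (ler_wpM2l M0 (@geom_bound q N d q0 q1)) _.
  have := exprn_ge0 (N + d) q0; rewrite /b; nra.
have cv : (fun K => \sum_(0 <= k < K) c k * x ^+ k - SN) @ \oo --> f x - SN.
  exact: cvgB (Hf x xr) (cvg_cst SN).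
have -> : 2 * M / x0 ^+ N * x ^+ N = b.
  have xN0 : x0 ^+ N != 0 by rewrite expf_neq0 // gt_eqF.
  rewrite /b xq; move: xN0; set xN := x0 ^+ N => xN0; rewrite exprMn -/xN; field; exact: xN0.
rewrite ler_norml; apply/andP; split.
  apply: (cvgr_to_ge cv); exists N => // K /= /key.
  by rewrite ler_norml => /andP[].
apply: (cvgr_to_le cv); exists N => // K /= /key.
by rewrite ler_norml => /andP[].
Unshelve. all: end_near.
Qed.

Lemma lower_bound (c : nat -> R) (f : R -> R) (r : R) j : 0 < r ->
  (forall x, 0 < x < r ->
     (fun N : nat => \sum_(0 <= k < N) c k * x ^+ k) @ \oo --> f x) ->
  (forall i, (i < j)%N -> c i = 0) -> c j != 0 ->
  \forall x \near 0^'+, `|c j| / 2 * x ^+ j <= `|f x|.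
Proof.
move=> r0 Hf cz cj.
have [C [C0 HC]] := @tail_bound c f r r0 Hf j.+1.
have cjp : 0 < `|c j| by rewrite normr_gt0.
have h2 : \forall x \near 0^'+, x < `|c j| / (2 * (C + 1)) :=
  nbhs_right_lt (ltac:(by rewrite divr_gt0 // mulr_gt0 // ltr_pwDr) : 0 < `|c j| / (2 * (C + 1))).
have h1 : \forall x \near 0^'+, 0 < x := nbhs_right_gt 0.
near=> x.
have xp : 0 < x by near: x; exact: h1.
have xs : x < `|c j| / (2 * (C + 1)) by near: x; exact: h2.
have H : `|f x - \sum_(0 <= k < j.+1) c k * x ^+ k| <= C * x ^+ j.+1 by near: x; exact: HC.
rewrite big_nat_recr //= big1_seq ?add0r in H; last first.
  by move=> i /andP[_]; rewrite mem_index_iota => /andP[_ /cz ->]; rewrite mul0r.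
have xj : 0 < x ^+ j by rewrite exprn_gt0.
have Cx : C * x <= `|c j| / 2.
  have : x * (2 * (C + 1)) < `|c j| by rewrite -ltr_pdivlMr // mulr_gt0 // ltr_pwDr.
  nra.
have : `|c j * x ^+ j| - `|f x| <= `|f x - c j * x ^+ j|.
  by rewrite distrC; apply: lerB_dist.
rewrite normrM (gtr0_norm xj) => H2.
rewrite exprS in H.
have : 0 <= (`|c j| / 2 - C * x) * x ^+ j by rewrite mulr_ge0 ?subr_ge0 // ltW.
nra.
Unshelve. all: end_near.
Qed.

Lemma ord_lower (f : R -> R) k : ord_le f k ->
  exists d, 0 < d /\ \forall x \near 0^'+, d * x ^+ k <= `|f x|.
Proof.
move=> [c [[r [r0 Hc]] [i [ik ci]]]].
have exP : exists i, (fun i => c i != 0) i by exists i.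
case: (ex_minnP exP) => j cj jmin.
have cz : forall i, (i < j)%N -> c i = 0.
  move=> i' lt; apply/eqP; apply/negPn/negP => /jmin; by rewrite leqNgt lt.
have LB := @lower_bound c f r j r0 Hc cz cj.
exists (`|c j| / 2); split; first by rewrite divr_gt0 // normr_gt0.
have h1 : \forall x \near 0^'+, 0 < x := nbhs_right_gt 0.
have h2 : \forall x \near 0^'+, x < 1 := nbhs_right_lt ltr01.
near=> x.
have xp : 0 < x by near: x; exact: h1.
have x1 : x < 1 by near: x; exact: h2.
apply: le_trans (_ : `|c j| / 2 * x ^+ j <= _); last by near: x; exact: LB.
rewrite ler_wpM2l ?divr_ge0 //.
apply: ler_wiXn2l; rewrite ?ltW //.
exact: leq_trans (jmin _ ci) ik.
Unshelve. all: end_near.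
Qed.

Lemma coeff_eq (g h : R -> R) (b bh : nat -> R) (K : R) N :
  taylor_coeffs0 g b -> taylor_coeffs0 h bh ->
  (\forall x \near 0^'+, `|g x - h x| <= K * x ^+ N) ->
  forall j, (j < N)%N -> b j = bh j.
Proof.
move=> [r1 [r10 H1]] [r2 [r20 H2]] Hgh.
set r := Num.min r1 r2.
have r0 : 0 < r by rewrite lt_min r10 r20.
have Hd : forall x, 0 < x < r ->
   (fun N : nat => \sum_(0 <= k < N) (b k - bh k) * x ^+ k) @ \oo --> (g - h) x.
  move=> x /andP[x0 xr].
  have xr1 : 0 < x < r1 by rewrite x0 (lt_le_trans xr) // ge_min lexx.
  have xr2 : 0 < x < r2 by rewrite x0 (lt_le_trans xr) // ge_min lexx orbT.
  have -> : (fun N : nat => \sum_(0 <= k < N) (b k - bh k) * x ^+ k) =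
    (fun N : nat => \sum_(0 <= k < N) b k * x ^+ k -
    \sum_(0 <= k < N) bh k * x ^+ k).
    apply/funext => M /=; rewrite -sumrB; apply: eq_bigr => k _; by rewrite mulrBl.
  exact: cvgB (H1 x xr1) (H2 x xr2).
elim/ltn_ind => j IH jN.
apply/eqP; rewrite -subr_eq0; apply/negPn/negP => dj.
have cz : forall i, (i < j)%N -> b i - bh i = 0.
  by move=> i lt; rewrite (IH i lt) ?subrr // (ltn_trans lt jN).
have LB := @lower_bound (fun k => b k - bh k) (g - h) r j r0 Hd cz dj.
have dp : 0 < `|b j - bh j| / 2 by rewrite divr_gt0 // normr_gt0.
have : \forall x \near (0:R)^'+, False.
  have h1 : \forall x \near 0^'+, 0 < x := nbhs_right_gt 0.
  have h2 : \forall x \near 0^'+, x < 1 := nbhs_right_lt ltr01.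
  have h3 : \forall x \near 0^'+, x < (`|b j - bh j| / 2) / (`|K| + 1) :=
    nbhs_right_lt (ltac:(by rewrite divr_gt0 // ltr_pwDr) : 0 < (`|b j - bh j| / 2) / (`|K| + 1)).
  near=> x.
  have xp : 0 < x by near: x; exact: h1.
  have x1 : x < 1 by near: x; exact: h2.
  have x3 : x < (`|b j - bh j| / 2) / (`|K| + 1) by near: x; exact: h3.
  have A1 : `|b j - bh j| / 2 * x ^+ j <= `|(g - h) x| by near: x; exact: LB.
  have A2 : `|g x - h x| <= K * x ^+ N by near: x; exact: Hgh.
  have xN : x ^+ N <= x ^+ j.+1 by apply: ler_wiXn2l; rewrite ?ltW.
  have xj : 0 < x ^+ j by rewrite exprn_gt0.
  have KK : K <= `|K| by apply: ler_norm.
  have K0 : 0 <= `|K| by [].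
  have xN0 : 0 <= x ^+ N by rewrite exprn_ge0 // ltW.
  rewrite exprS in xN.
  have : x * (`|K| + 1) < `|b j - bh j| / 2 by rewrite -ltr_pdivlMr // ltr_pwDr.
  move: A1; rewrite /= => A1.
  set D := `|b j - bh j| / 2 in A1 dp x3 *.
  set y := x ^+ j in xN xj A1.
  set z := x ^+ N in xN A2 xN0.
  set a := `|g x - h x| in A1 A2.
  nra.
by case/filter_ex.
Unshelve. all: end_near.
Qed.

Lemma analytic_lip (f : R -> R) : analytic_at0 f ->
  exists C, 0 <= C /\ \forall x \near 0^'+, `|f x - f 0| <= C * x.
Proof.
move=> [r [c [r0 Hps]]].
have Hc : forall x, 0 < x < r ->
   (fun N : nat => \sum_(0 <= k < N) c k * x ^+ k) @ \oo --> f x.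
  move=> x /andP[x0 xr]; apply: Hps; by rewrite gtr0_norm.
have [C [C0 HC]] := @tail_bound c f r r0 Hc 1%N.
have f0 : f 0 = c 0%N.
  have H1 := Hps 0 (ltac:(by rewrite normr0) : `|0| < r).
  have H2 : (fun N : nat => \sum_(0 <= k < N) c k * 0 ^+ k) @ \oo --> c 0%N.
    apply: cvg_near_cst; exists 1%N => // M /= M1.
    rewrite big_ltn //= expr0 mulr1 big1_seq ?addr0 // => i /andP[_].
    by rewrite mem_index_iota => /andP[/ltn_predK <- _]; rewrite expr0n /= mulr0.
  exact: (cvg_unique _ H1 H2).
exists C; split => //.
near=> x.
have H : `|f x - \sum_(0 <= k < 1) c k * x ^+ k| <= C * x ^+ 1 by near: x; exact: HC.
by move: H; rewrite big_nat1 expr0 mulr1 expr1 -f0.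
Unshelve. all: end_near.
Qed.

Lemma eqle (x y : R) : x = y -> x <= y. Proof. by move->. Qed.

Section Lin.
Variable B : nat.
Implicit Types (v w : 'rV[R]_B) (D : 'M[R]_B).

Definition rs v := \sum_i v 0 i.
Definition rho D i := \sum_j D i j.
Definition Gam v w := \sum_j `| v 0 j * rs w - w 0 j * rs v |.
Definition Tm D i l j := D i j * rho D l - D l j * rho D i.

Lemma rs_mul v D : rs (v *m D) = \sum_i v 0 i * rho D i.
Proof.
rewrite /rs /rho; under eq_bigr do rewrite mxE.
rewrite exchange_big; apply: eq_bigr => i _; by rewrite mulr_sumr.
Qed.

Lemma Xj_eq v w D j :
  (v *m D) 0 j * rs (w *m D) - (w *m D) 0 j * rs (v *m D) =
  \sum_i \sum_l v 0 i * w 0 l * Tm D i l j.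
Proof.
rewrite !rs_mul !mxE /Tm; move: (rho D) => r.
rewrite [X in _ - X]mulrC !mulr_suml -sumrB.
apply: eq_bigr => i _; rewrite !mulr_sumr -sumrB.
apply: eq_bigr => l _; ring.
Qed.

Lemma antisym_sum w D j : \sum_i \sum_l w 0 i * w 0 l * Tm D i l j = 0.
Proof.
set S := \sum_i _.
have : S = - S.
  rewrite {1}/S exchange_big /S -sumrN; apply: eq_bigr => i _.
  rewrite -sumrN; apply: eq_bigr => l _; rewrite /Tm; ring.
lra.
Qed.

Lemma Tm_bound D eta i l j :
  (forall i l j m, `|D i j * D l m - D l j * D i m| <= eta) ->
  `|Tm D i l j| <= B%:R * eta.
Proof.
move=> Hm.
have -> : Tm D i l j = \sum_m (D i j * D l m - D l j * D i m).
  by rewrite /Tm /rho sumrB !mulr_sumr.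
apply: le_trans (ler_norm_sum _ _ _) _.
apply: (@le_trans _ _ (\sum_(m < B) eta)); first by apply: ler_sum => m _; exact: Hm.
by rewrite sumr_const card_ord mulr_natl.
Qed.

Lemma step_bound v w D eta : 0 <= eta ->
  (forall i, 0 <= v 0 i) -> (forall i, 0 <= w 0 i) ->
  (forall i l j m, `|D i j * D l m - D l j * D i m| <= eta) ->
  Gam (v *m D) (w *m D) <= (B%:R * (B%:R * eta)) * Gam v w.
Proof.
move=> eta0 v0 w0 Hm.
have G0 : 0 <= Gam v w by rewrite sumr_ge0.
have Bh : 0 <= B%:R * eta :> R by rewrite mulr_ge0.
apply: (@le_trans _ _ (\sum_(j < B) (B%:R * eta * Gam v w))); last first.
  rewrite sumr_const card_ord -mulr_natl; apply: eqle; ring.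
rewrite {1}/Gam; apply: ler_sum => j _; rewrite Xj_eq.
have [sw0|swp] := eqVneq (rs w) 0.
  have wz : forall i, w 0 i = 0.
    move=> i; apply: (psumr_eq0P (fun i _ => w0 i) sw0); done.
  rewrite big1 ?normr0 ?mulr_ge0 // => i _; rewrite big1 // => l _.
  by rewrite wz mulr0 mul0r.
have swpos : 0 < rs w by rewrite lt_def swp sumr_ge0.
rewrite -(ler_pM2l swpos) -{1}(gtr0_norm swpos) -normrM.
have -> : rs w * (\sum_i \sum_l v 0 i * w 0 l * Tm D i l j) =
  \sum_i \sum_l (v 0 i * rs w - w 0 i * rs v) * w 0 l * Tm D i l j.
  have E := antisym_sum w D j.
  transitivity (rs w * (\sum_i \sum_l v 0 i * w 0 l * Tm D i l j) -
                rs v * (\sum_i \sum_l w 0 i * w 0 l * Tm D i l j)).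
    by rewrite E mulr0 subr0.
  move: (rs w) (rs v) (Tm D) => a c T.
  rewrite !mulr_sumr -sumrB; apply: eq_bigr => i _.
  rewrite !mulr_sumr -sumrB; apply: eq_bigr => l _; ring.
apply: le_trans (ler_norm_sum _ _ _) _.
apply: (@le_trans _ _ (\sum_i `|v 0 i * rs w - w 0 i * rs v| * (rs w * (B%:R * eta)))).
  apply: ler_sum => i _; apply: le_trans (ler_norm_sum _ _ _) _.
  apply: (@le_trans _ _ (\sum_l `|v 0 i * rs w - w 0 i * rs v| * (w 0 l * (B%:R * eta)))).
    apply: ler_sum => l _.
    rewrite !normrM (ger0_norm (w0 l)) -!mulrA ler_wpM2l //.
    rewrite ler_wpM2l //; exact: Tm_bound.
  by rewrite -mulr_sumr -mulr_suml.
rewrite -mulr_suml; apply: eqle; rewrite /Gam; ring.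
Qed.
End Lin.

Section Lin2.
Variable B : nat.
Implicit Types (v w : 'rV[R]_B) (D : 'M[R]_B).

Definition nonnegv v := forall i, 0 <= v 0 i.

Lemma nonneg_mul v D : nonnegv v -> (forall i j, 0 <= D i j) -> nonnegv (v *m D).
Proof. move=> v0 D0 i; rewrite mxE sumr_ge0 // => k _; exact: mulr_ge0. Qed.

Lemma rs_ge0 v : nonnegv v -> 0 <= rs v.
Proof. by move=> v0; rewrite sumr_ge0. Qed.

Lemma Gam_init v w : nonnegv v -> nonnegv w -> Gam v w <= 2 * (rs v * rs w).
Proof.
move=> v0 w0; rewrite /Gam.
apply: (@le_trans _ _ (\sum_j (v 0 j * rs w + w 0 j * rs v))).
  apply: ler_sum => j _; apply: le_trans (ler_normB _ _) _.
  by rewrite !ger0_norm ?mulr_ge0 ?rs_ge0.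
rewrite big_split /= -!mulr_suml; apply: eqle; rewrite /rs; ring.
Qed.

Variable (A : nat).
Variable M : 'I_A -> 'M[R]_B.
Definition Fo v (s : seq 'I_A) := foldl (fun v b => v *m M b) v s.

Lemma iter_bound (s : seq 'I_A) eta : 0 <= eta ->
  (forall b i j, 0 <= M b i j) ->
  (forall b i l j m, `|M b i j * M b l m - M b l j * M b i m| <= eta) ->
  forall v w, nonnegv v -> nonnegv w ->
  Gam (Fo v s) (Fo w s) <= (B%:R * (B%:R * eta)) ^+ size s * Gam v w.
Proof.
move=> eta0 M0 Mm; elim: s => [|b s IH] v w v0 w0 /=.
  by rewrite expr0 mul1r.
apply: le_trans (IH _ _ (nonneg_mul v0 (M0 b)) (nonneg_mul w0 (M0 b))) _.
rewrite exprSr -mulrA ler_wpM2l ?exprn_ge0 ?mulr_ge0 //.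
exact: step_bound.
Qed.

Lemma Fo_nonneg (s : seq 'I_A) v : (forall b i j, 0 <= M b i j) ->
  nonnegv v -> nonnegv (Fo v s).
Proof.
move=> M0; elim: s v => [|b s IH] v v0 //=; apply: IH; exact: nonneg_mul.
Qed.

End Lin2.

Lemma final_bound B (y yh : 'rV[R]_B) (D : 'M[R]_B) :
  nonnegv y -> nonnegv yh -> 0 < rs y -> 0 < rs yh ->
  (forall i j, 0 <= D i j) -> (forall i, rho D i <= 1) ->
  `|rs (y *m D) / rs y - rs (yh *m D) / rs yh| <= Gam y yh / (rs y * rs yh).
Proof.
move=> y0 yh0 ry ryh D0 D1.
have -> : rs (y *m D) / rs y - rs (yh *m D) / rs yh =
   (rs (y *m D) * rs yh - rs (yh *m D) * rs y) / (rs y * rs yh).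
  by field; rewrite !gt_eqF.
rewrite normrM (gtr0_norm (ltac:(by rewrite invr_gt0 mulr_gt0) : 0 < (rs y * rs yh)^-1)).
rewrite ler_pM2r ?invr_gt0 ?mulr_gt0 //.
have -> : rs (y *m D) * rs yh - rs (yh *m D) * rs y =
  \sum_i (y 0 i * rs yh - yh 0 i * rs y) * rho D i.
  rewrite !rs_mul; move: (rs yh) (rs y) (rho D) => a c r.
  rewrite !mulr_suml -sumrB; apply: eq_bigr => i _; ring.
apply: le_trans (ler_norm_sum _ _ _) _; apply: ler_sum => i _.
rewrite normrM -[X in _ <= X]mulr1 ler_wpM2l //.
have r0 : 0 <= rho D i by rewrite sumr_ge0.
by rewrite ger0_norm.
Qed.

Lemma minor_pert (a b c d a0 b0 c0 d0 M c1 : R) :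
  a0 * b0 - c0 * d0 = 0 ->
  `|a - a0| <= c1 -> `|b - b0| <= c1 -> `|c - c0| <= c1 -> `|d - d0| <= c1 ->
  `|a0| <= M -> `|b0| <= M -> `|c0| <= M -> `|d0| <= M ->
  `|a * b - c * d| <= 2 * (2 * (M * c1) + c1 * c1).
Proof.
move=> z ha hb hc hd ha0 hb0 hc0 hd0.
have pm : forall x y X Y : R, `|x| <= X -> `|y| <= Y -> `|x * y| <= X * Y.
  move=> x y X Y hx hy; rewrite normrM; apply: ler_pM => //.
have -> : a * b - c * d =
  ((a - a0) * b0 + a0 * (b - b0) + (a - a0) * (b - b0)) -
  ((c - c0) * d0 + c0 * (d - d0) + (c - c0) * (d - d0)) + (a0 * b0 - c0 * d0).
  ring.
rewrite z addr0.
apply: le_trans (ler_normB _ _) _.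
have e1 : forall x x0 y y0 : R, `|x - x0| <= c1 -> `|y - y0| <= c1 -> `|x0| <= M -> `|y0| <= M ->
   `|(x - x0) * y0 + x0 * (y - y0) + (x - x0) * (y - y0)| <= 2 * (M * c1) + c1 * c1.
  move=> x x0 y y0 h1 h2 h3 h4.
  apply: le_trans (ler_normD _ _) _.
  apply: lerD; last exact: pm.
  apply: le_trans (ler_normD _ _) _.
  have := pm _ _ _ _ h1 h4; have := pm _ _ _ _ h3 h2; lra.
have := e1 _ _ _ _ ha hb ha0 hb0; have := e1 _ _ _ _ hc hd hc0 hd0; lra.
Qed.

Lemma rank1_minor B (M : 'M[R]_B) :
  \rank M = 1%N -> forall i l j m, M i j * M l m - M l j * M i m = 0.
Proof.
move=> rk i l j m.
set L := col_ebase M; set U := row_ebase M.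
have ME : forall a b, M a b = \sum_k L a k * (val k < 1)%:R * U k b.
  move=> a b; rewrite -{1}(mulmx_ebase M) rk mxE; apply: eq_bigr => k _.
  rewrite mxE (bigD1 k) //= big1 ?addr0.
    by rewrite mxE eqxx.
  move=> q qk; rewrite mxE.
  have -> : (nat_of_ord q == nat_of_ord k) = false by apply/negbTE; rewrite val_eqE.
  by rewrite /= mulr0.
rewrite !ME !mulr_suml -sumrB big1 // => k _.
rewrite !mulr_sumr -sumrB big1 // => k' _.
have [k0|k0] := ltnP (val k) 1; have [k0'|k0'] := ltnP (val k') 1.
- have kk : k = k' by apply: val_inj; move: k0 k0'; rewrite /= !ltnS !leqn0 => /eqP -> /eqP ->.
  rewrite -kk; ring.
- rewrite /=; ring.
- rewrite /=; ring.
- rewrite /=; ring.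
Qed.

Lemma le_sum_fin (I : finType) (F : I -> R) i : (forall i, 0 <= F i) -> F i <= \sum_i F i.
Proof. move=> F0; rewrite (bigD1 i) //= lerDl sumr_ge0 // => k _; exact: F0. Qed.

Lemma word_prob_F A B (Phi : 'I_B -> 'I_A) (p : 'rV[R]_B) (D : 'M[R]_B) s :
  \sum_i p 0 i = 1 -> p *m D = p ->
  word_prob Phi p D s = rs (Fo (restr_mx Phi D) p s).
Proof.
move=> p1 pD; case: s => [|a s] /=; first by rewrite /rs p1.
have -> : \row_j (if Phi j == a then p 0 j else 0) = p *m restr_mx Phi D a.
  apply/rowP => j; rewrite !mxE.
  case: ifP => Hj.
    have := congr1 (fun M : 'M[R]_(1, B) => M 0 j) pD; rewrite mxE => <-.
    by apply: eq_bigr => i _; rewrite mxE Hj.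
  by rewrite big1 // => i _; rewrite mxE Hj mulr0.
by [].
Qed.

Lemma cond_split A B (Phi : 'I_B -> 'I_A) (p : 'rV[R]_B) (D : 'M[R]_B) v u a :
  \sum_i p 0 i = 1 -> p *m D = p ->
  let M := restr_mx Phi D in
  cond_prob Phi p D [:: a] (v ++ u) =
    rs (Fo M (Fo M p v) u *m M a) / rs (Fo M (Fo M p v) u) /\
  cond_prob Phi p D u v = rs (Fo M (Fo M p v) u) / rs (Fo M p v).
Proof.
move=> p1 pD M; rewrite /cond_prob !word_prob_F //; split.
  by rewrite /Fo [foldl _ _ (_ ++ [:: a])]foldl_cat !foldl_cat.
by rewrite /Fo foldl_cat.
Qed.

Lemma arith1 (M0 C e : R) : 0 <= M0 -> 0 <= C -> 0 < e -> e <= 1 ->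
  2 * (2 * (M0 * (C * e)) + C * e * (C * e)) <= 2 * (2 * (M0 * C) + C * C) * e.
Proof.
move=> M0p C0 e0 e1.
have : 0 <= C * C * e * (1 - e) by rewrite !mulr_ge0 // ?subr_ge0 // ltW.
nra.
Qed.

Lemma core A B (Phi : 'I_B -> 'I_A) (D D0 : 'M[R]_B) (p : 'rV[R]_B)
  (C M0 e d1 d2 : R) (k n : nat) (v vh u : seq 'I_A) (a : 'I_A) :
  0 < e -> e <= 1 -> 0 <= C -> 0 < d1 -> 0 < d2 ->
  row_stochastic D -> weak_black_hole Phi D0 ->
  (forall i j, `|D i j - D0 i j| <= C * e) ->
  (forall i j, `|D0 i j| <= M0) ->
  stationary_dist D p -> size u = n -> (2 * k <= n)%N ->
  d1 * e ^+ k <= `|cond_prob Phi p D u v| ->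
  d2 * e ^+ k <= `|cond_prob Phi p D u vh| ->
  `|cond_prob Phi p D [:: a] (v ++ u) - cond_prob Phi p D [:: a] (vh ++ u)| <=
     2 * (B%:R * (B%:R * (2 * (2 * (M0 * C) + C * C)))) ^+ n / (d1 * d2)
       * e ^+ (n - 2 * k).
Proof.
move=> e0 e1 C0 d10 d20 [Dnn Drs] Hwbh HD HM0 [p0 p1 pD] su nk H1 H2.
set M := restr_mx Phi D.
have [c1 c2] := cond_split Phi v u a p1 pD.
have [c3 c4] := cond_split Phi vh u a p1 pD.
rewrite c1 c3; rewrite c2 in H1; rewrite c4 in H2.
set x := Fo M p v in H1 *; set xh := Fo M p vh in H2 *.
set y := Fo M x u in H1 *; set yh := Fo M xh u in H2 *.
have Mnn : forall b i j, 0 <= M b i j.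
  by move=> b i j; rewrite mxE; case: ifP.
have pn : nonnegv p by [].
have xn : nonnegv x by apply: Fo_nonneg.
have xhn : nonnegv xh by apply: Fo_nonneg.
have yn : nonnegv y by apply: Fo_nonneg.
have yhn : nonnegv yh by apply: Fo_nonneg.
have ek : 0 < e ^+ k by rewrite exprn_gt0.
have pos : forall s t : R, 0 <= s -> 0 <= t -> forall d, 0 < d -> d * e ^+ k <= `|s / t| ->
    0 < s /\ 0 < t.
  move=> s t s0 t0 d d0 H.
  have : 0 < `|s / t| by apply: lt_le_trans H; rewrite mulr_gt0.
  rewrite normr_gt0 mulf_eq0 invr_eq0 negb_or => /andP[sn tn].
  by rewrite !lt_def sn tn s0 t0.
have [ry rx] := pos _ _ (rs_ge0 yn) (rs_ge0 xn) _ d10 H1.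
have [ryh rxh] := pos _ _ (rs_ge0 yhn) (rs_ge0 xhn) _ d20 H2.
set K1 := 2 * (2 * (M0 * C) + C * C).
have M00 : forall i : 'I_B, 0 <= M0 by move=> i; apply: le_trans (HM0 i i).
have minor : forall b i l j m,
    `|M b i j * M b l m - M b l j * M b i m| <= K1 * e.
  move=> b i l j m.
  set N := restr_mx Phi D0 b.
  have Nz : N i j * N l m - N l j * N i m = 0.
    case: (Hwbh b) => [Hz|rk].
      by rewrite /N Hz !mxE subrr.
    exact: rank1_minor.
  have dd : forall i j, `|M b i j - N i j| <= C * e.
    move=> i' j'; rewrite !mxE; case: ifP => _; first exact: HD.
    by rewrite subrr normr0 mulr_ge0 // ltW.
  have nb : forall i j, `|N i j| <= M0.
    move=> i' j'; rewrite !mxE; case: ifP => _; first exact: HM0.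
    by rewrite normr0; apply: M00 i'.
  apply: le_trans (minor_pert Nz (dd _ _) (dd _ _) (dd _ _) (dd _ _)
                     (nb _ _) (nb _ _) (nb _ _) (nb _ _)) _.
  exact: arith1 (M00 i) C0 e0 e1.
have [i0 _|none] := pickP (fun _ : 'I_B => true); last first.
  by move: rx; rewrite /rs big1 ?ltxx // => i _; have := none i.
have K10 : 0 <= K1 * e.
  have M0p := M00 i0.
  rewrite /K1; apply: mulr_ge0 (ltW e0); apply: mulr_ge0 => //.
  have h1 : 0 <= M0 * C by apply: mulr_ge0.
  have h2 : 0 <= C * C by apply: mulr_ge0.
  by apply: addr_ge0 => //; apply: mulr_ge0.
have rho1 : forall i, rho (M a) i <= 1.
  move=> i; rewrite -(Drs i) /rho; apply: ler_sum => j _.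
  rewrite mxE; case: ifP => // _; exact: Dnn.
have F1 := final_bound yn yhn ry ryh (Mnn a) rho1.
have F2 := iter_bound u K10 Mnn minor xn xhn.
rewrite su in F2.
have F3 := Gam_init xn xhn.
set Q := (B%:R * (B%:R * (K1 * e))) ^+ n in F2.
have Q0 : 0 <= Q by rewrite exprn_ge0 // mulr_ge0 // mulr_ge0.
have Gb : Gam y yh <= Q * (2 * (rs x * rs xh)).
  apply: le_trans F2 _; rewrite -subr_ge0 -mulrBr; apply: mulr_ge0 => //; rewrite subr_ge0; exact: F3.
apply: le_trans F1 _.
apply: (@le_trans _ _ (Q * (2 * (rs x * rs xh)) / (rs y * rs yh))).
  by rewrite ler_pM2r // invr_gt0 mulr_gt0.
have H1' : d1 * e ^+ k <= rs y / rs x.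
  by move: H1; rewrite ger0_norm // divr_ge0 // ltW.
have H2' : d2 * e ^+ k <= rs yh / rs xh.
  by move: H2; rewrite ger0_norm // divr_ge0 // ltW.
have -> : Q * (2 * (rs x * rs xh)) / (rs y * rs yh) =
   2 * Q * ((rs y / rs x) * (rs yh / rs xh))^-1.
  by field; rewrite !gt_eqF.
apply: (@le_trans _ _ (2 * Q * ((d1 * e ^+ k) * (d2 * e ^+ k))^-1)).
  apply: ler_wpM2l; first by rewrite mulr_ge0.
  rewrite lef_pV2 ?posrE ?mulr_gt0 ?divr_gt0 ?invr_gt0 //.
  by apply: ler_pM => //; rewrite mulr_ge0 // ltW.
have QE : Q = (B%:R * (B%:R * K1)) ^+ n * e ^+ n.
  by rewrite -exprMn; congr (_ ^+ _); ring.
have EE : e ^+ n = e ^+ (n - 2 * k) * e ^+ k * e ^+ k.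
  have nE : n = (n - 2 * k + k + k)%N by rewrite -addnA addnn -mul2n subnK.
  by rewrite {1}nE !exprD.
move: QE; rewrite /Q => ->; rewrite EE; apply: eqle; field.
by rewrite !gt_eqF.
Qed.
End T.

Unset Implicit Arguments.

Theorem lemma2p5 (R : realType) (A B : nat) (Phi : 'I_B -> 'I_A)
  (Delta : R -> 'M[R]_B) (pi : R -> 'rV[R]_B)
  (m mh n k : nat) (z zh : seq 'I_A) :
  normally_parameterized Phi Delta ->
  (forall e, 0 < e -> stationary_dist (Delta e) (pi e)) ->
  size z = m.+1 -> size zh = mh.+1 ->
  (n <= m)%N -> (n <= mh)%N ->
  drop (m - n) z = drop (mh - n) zh ->
  ord_le (fun e => cond_prob Phi (pi e) (Delta e)
                     (take n (drop (m - n) z)) (take (m - n) z)) k ->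
  ord_le (fun e => cond_prob Phi (pi e) (Delta e)
                     (take n (drop (mh - n) zh)) (take (mh - n) zh)) k ->
  forall b bh : nat -> R,
    taylor_coeffs0 (fun e => cond_prob Phi (pi e) (Delta e)
                               (drop m z) (take m z)) b ->
    taylor_coeffs0 (fun e => cond_prob Phi (pi e) (Delta e)
                               (drop mh zh) (take mh zh)) bh ->
    forall j : nat, (j + 4 * k + 1 <= n)%N -> b j = bh j.
Proof.
move=> [Han Hst Hwbh] Hpi sz szh nm nmh Hw Hord1 Hord2 b bh Hb Hbh j hj.
set w := drop (m - n) z in Hw Hord1.
rewrite -Hw in Hord2.
have sw : size w = n.+1 by rewrite size_drop sz; lia.
have st : size (drop n w) = 1%N by rewrite size_drop sw; lia.
have [a Ha] : exists a, drop n w = [:: a].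
  by move: st; case: (drop n w) => [|a [|? ?]] //; exists a.
have ez : take m z = take (m - n) z ++ take n w by rewrite /w -takeD subnK.
have ez2 : drop m z = drop n w by rewrite /w drop_drop addnC subnK.
have ezh : take mh zh = take (mh - n) zh ++ take n w by rewrite Hw -takeD subnK.
have ezh2 : drop mh zh = drop n w by rewrite Hw drop_drop addnC subnK.
rewrite ez ez2 Ha in Hb; rewrite ezh ezh2 Ha in Hbh.
have [d1 [d10 Hd1]] := ord_lower Hord1.
have [d2 [d20 Hd2]] := ord_lower Hord2.
have [Cf HCf] := boolp.choice (fun ij : 'I_B * 'I_B => analytic_lip (Han ij.1 ij.2)).
set C := \sum_ij Cf ij.
have Cf0 : forall ij, 0 <= Cf ij by move=> ij; case: (HCf ij).
have C0 : 0 <= C by rewrite sumr_ge0.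
set M0 := \sum_(ij : 'I_B * 'I_B) `|Delta 0 ij.1 ij.2|.
have HM0 : forall i j, `|Delta 0 i j| <= M0.
  by move=> i1 j1; rewrite /M0 (bigD1 (i1, j1)) //= lerDl sumr_ge0.
have HD : \forall e \near (0:R)^'+, forall ij : 'I_B * 'I_B,
    `|Delta e ij.1 ij.2 - Delta 0 ij.1 ij.2| <= C * e.
  apply: filter_forall => ij; have [_ H] := HCf ij.
  have h1 : \forall e \near (0:R)^'+, 0 < e := nbhs_right_gt 0.
  near=> e.
  have ep : 0 < e by near: e; exact: h1.
  have He : `|Delta e ij.1 ij.2 - Delta 0 ij.1 ij.2| <= Cf ij * e by near: e; exact: H.
  apply: le_trans He _; rewrite ler_pM2r //; exact: le_sum_fin.
have CE := coeff_eq (K := 2 * (B%:R * (B%:R * (2 * (2 * (M0 * C) + C * C)))) ^+ n / (d1 * d2)) (N := (n - 2 * k)%N) Hb Hbh.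
apply: CE; last by lia.
have h1 : \forall e \near (0:R)^'+, 0 < e := nbhs_right_gt 0.
have h2 : \forall e \near (0:R)^'+, e < 1 := nbhs_right_lt ltr01.
near=> e.
have ep : 0 < e by near: e; exact: h1.
have e1 : e < 1 by near: e; exact: h2.
have HDe : forall ij : 'I_B * 'I_B, `|Delta e ij.1 ij.2 - Delta 0 ij.1 ij.2| <= C * e.
  by near: e; exact: HD.
have Hd1e : d1 * e ^+ k <= `|cond_prob Phi (pi e) (Delta e) (take n w) (take (m - n) z)|.
  by near: e; exact: Hd1.
have Hd2e : d2 * e ^+ k <= `|cond_prob Phi (pi e) (Delta e) (take n w) (take (mh - n) zh)|.
  by near: e; exact: Hd2.
have [Hsto _] := Hst e ep.
apply: (core a ep (ltW e1) C0 d10 d20 Hsto Hwbh _ HM0 (Hpi e ep) _ _ Hd1e Hd2e).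
- by move=> i1 j1; exact: (HDe (i1, j1)).
- by rewrite size_takel // sw.
- lia.
Unshelve. all: end_near.
Qed.
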